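(* Let $K$ be a partition of a metric space $(Y,\rho)$ parametrized by a tree with a reference point $(T,\pi,\phi)$ and satisfying the basic framework with constants $\zeta\in(0,1)$ and $\xi>0$. Then there exist $\xi'>0$ and points $\{y_w\}_{w\in T}$ with $y_w\in K_w$ and $B_\rho(y_w,\xi'\zeta^{[w]})\subset K_w$ for all $w\in T$, such that $\bigcup_{w\in T_n}\{y_w\}\subset\bigcup_{w\in T_m}\{y_w\}$ whenever $n\le m$.
   Context: Trees and partitions: a tree with a reference point $(T,\pi,\phi)$ is a countable set $T$ with a map $\pi:T\to T$ such that $F_\pi=\{w:\pi^n(w)=w$ for some $n\ge1\}$ has at most one element, and for all $w,v$ there are $n,m\ge0$ with $\pi^n(w)=\pi^m(v)$; $\phi\in F_\pi$ if $F_\pi\neq\emptyset$, otherwise $\phi$ is a fixed element. Let $b(w,v)=\min\{n\ge0:\pi^n(w)=\pi^m(v)$ for some $m\ge0\}$, $[w]=b(w,\phi)-b(\phi,w)$, $T_n=\{w:[w]=n\}$ ($n\in\mathbb Z$), and $\acute\pi^{-k}(w)=\pi^{-k}(w)\cap T_{[w]+k}$. A partition of a metric space $(Y,\rho)$ parametrized by $(T,\pi,\phi)$ is a map $w\mapsto K_w\subset Y$ with: each $K_w$ compact, nonempty and not a single point; $\bigcup_{w\in T_0}K_w=Y$; $\bigcup_{v\in\acute\pi^{-1}(w)}K_v=K_w$ for all $w$; and $\bigcap_{k\in\mathbb Z}K_{w_k}$ is a single point whenever $(w_k)_{k\in\mathbb Z}$ satisfies $\pi(w_{k+1})=w_k$.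 Let $E_n=\{(w,v)\in T_n\times T_n:K_w\cap K_v\ne\emptyset,w\ne v\}$ and $l_n$ the graph distance on $(T_n,E_n)$ (possibly $\infty$). $K$ satisfies the basic framework if $\sup_w\#\acute\pi^{-1}(w)<\infty$ and: interiors of distinct $K_w,K_v$ with $[w]=[v]$ are disjoint; there is $\zeta\in(0,1)$ with $\mathrm{diam}_\rho(K_w)\asymp\zeta^{[w]}$; there is $\xi>0$ such that for each $w$ there is $x_w\in K_w$ with $B_\rho(x_w,\xi\zeta^{[w]})\subset K_w$; there is $M_*\in\mathbb N$ with $\rho(x,y)\asymp\zeta^{\Delta_{M_*}(x,y)}$, where $\Delta_m(x,y)=\sup\{n:x\in K_w,y\in K_v,l_n(w,v)\le m$ for some $w,v\in T_n\}$; and $L_*=\sup_w\#\{v:(w,v)\in E_{[w]}\}<\infty$. *)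

(* Defs.v *)
From Stdlib Require Import Reals ZArith List ClassicalEpsilon.
Open Scope R_scope.

Definition is_metric {Y : Type} (rho : Y -> Y -> R) : Prop :=
  (forall x y, 0 <= rho x y) /\
  (forall x y, rho x y = 0 <-> x = y) /\
  (forall x y, rho x y = rho y x) /\
  (forall x y z, rho x z <= rho x y + rho y z).

Definition ball {Y : Type} (rho : Y -> Y -> R) (x : Y) (r : R) : Y -> Prop :=
  fun y => rho x y < r.

Definition subset {Y : Type} (A B : Y -> Prop) : Prop := forall y, A y -> B y.

Definition is_open {Y : Type} (rho : Y -> Y -> R) (U : Y -> Prop) : Prop :=
  forall x, U x -> exists r, 0 < r /\ subset (ball rho x r) U.

Definition is_compact {Y : Type} (rho : Y -> Y -> R) (S : Y -> Prop) : Prop :=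
  forall (I : Type) (U : I -> Y -> Prop),
    (forall i, is_open rho (U i)) ->
    (forall x, S x -> exists i, U i x) ->
    exists l : list I, forall x, S x -> exists i, In i l /\ U i x.

Definition interior {Y : Type} (rho : Y -> Y -> R) (S : Y -> Prop) : Y -> Prop :=
  fun x => exists r, 0 < r /\ subset (ball rho x r) S.

Definition is_diam {Y : Type} (rho : Y -> Y -> R) (S : Y -> Prop) (d : R) : Prop :=
  is_lub (fun r => exists x y, S x /\ S y /\ r = rho x y) d.

Definition countable_type (T : Type) : Prop :=
  exists f : T -> nat, forall a b, f a = f b -> a = b.

Definition in_F {T : Type} (pi : T -> T) (w : T) : Prop :=
  exists n : nat, (1 <= n)%nat /\ Nat.iter n pi w = w.

Definition is_tree_ref (T : Type) (pi : T -> T) (phi : T) : Prop :=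
  countable_type T /\
  (forall w v, in_F pi w -> in_F pi v -> w = v) /\
  (forall w v, exists n m : nat, Nat.iter n pi w = Nat.iter m pi v) /\
  ((exists w, in_F pi w) -> in_F pi phi).

Definition meets {T : Type} (pi : T -> T) (w v : T) (n : nat) : Prop :=
  exists m : nat, Nat.iter n pi w = Nat.iter m pi v.

Definition bmin {T : Type} (pi : T -> T) (w v : T) (n : nat) : Prop :=
  meets pi w v n /\ forall k, (k < n)%nat -> ~ meets pi w v k.

Definition bdist {T : Type} (pi : T -> T) (w v : T) : nat :=
  epsilon (inhabits 0%nat) (bmin pi w v).

Definition lev {T : Type} (pi : T -> T) (phi : T) (w : T) : Z :=
  (Z.of_nat (bdist pi w phi) - Z.of_nat (bdist pi phi w))%Z.

Definition child {T : Type} (pi : T -> T) (phi : T) (w v : T) : Prop :=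
  pi v = w /\ lev pi phi v = (lev pi phi w + 1)%Z.

Definition is_partition {Y T : Type} (rho : Y -> Y -> R) (pi : T -> T) (phi : T)
    (K : T -> Y -> Prop) : Prop :=
  (forall w, is_compact rho (K w)) /\
  (forall w, exists x, K w x) /\
  (forall w, exists x y, K w x /\ K w y /\ x <> y) /\
  (forall x : Y, exists w, lev pi phi w = 0%Z /\ K w x) /\
  (forall w x, K w x <-> exists v, child pi phi w v /\ K v x) /\
  (forall s : Z -> T, (forall k, pi (s (k + 1)%Z) = s k) ->
     exists x, (forall k, K (s k) x) /\
               forall y, (forall k, K (s k) y) -> y = x).

Definition edge {Y T : Type} (pi : T -> T) (phi : T) (K : T -> Y -> Prop)
    (n : Z) (w v : T) : Prop :=
  lev pi phi w = n /\ lev pi phi v = n /\ (exists x, K w x /\ K v x) /\ w <> v.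

(* reach n k w v : l_n(w,v) <= k (graph distance on (T_n,E_n)) *)
Fixpoint reach {Y T : Type} (pi : T -> T) (phi : T) (K : T -> Y -> Prop)
    (n : Z) (k : nat) (w v : T) : Prop :=
  match k with
  | O => lev pi phi w = n /\ w = v
  | S k' => reach pi phi K n k' w v \/
            exists u, reach pi phi K n k' w u /\ edge pi phi K n u v
  end.

(* the set whose supremum is Delta_m(x,y) *)
Definition DeltaSet {Y T : Type} (pi : T -> T) (phi : T) (K : T -> Y -> Prop)
    (m : nat) (x y : Y) (n : Z) : Prop :=
  exists w v, lev pi phi w = n /\ lev pi phi v = n /\ K w x /\ K v y /\
              reach pi phi K n m w v.

(* supremum in Z ∪ {+oo}; None stands for +oo *)
Definition Zsup (D : Z -> Prop) (d : option Z) : Prop :=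
  match d with
  | None => forall k, exists n, D n /\ (k <= n)%Z
  | Some n => D n /\ forall k, D k -> (k <= n)%Z
  end.

(* zeta^d with the convention zeta^(+oo) = 0 (0 < zeta < 1) *)
Definition zpow (zeta : R) (d : option Z) : R :=
  match d with None => 0 | Some n => powerRZ zeta n end.

Definition basic_framework {Y T : Type} (rho : Y -> Y -> R) (pi : T -> T) (phi : T)
    (K : T -> Y -> Prop) (zeta xi : R) : Prop :=
  (exists N : nat, forall w, exists l : list T, (length l <= N)%nat /\
       forall v, child pi phi w v -> In v l) /\
  (forall w v x, lev pi phi w = lev pi phi v -> w <> v ->
       ~ (interior rho (K w) x /\ interior rho (K v) x)) /\
  0 < zeta < 1 /\
  (exists c1 c2, 0 < c1 /\ 0 < c2 /\ forall w, exists d, is_diam rho (K w) d /\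
       c1 * powerRZ zeta (lev pi phi w) <= d <= c2 * powerRZ zeta (lev pi phi w)) /\
  0 < xi /\
  (forall w, exists x, K w x /\ subset (ball rho x (xi * powerRZ zeta (lev pi phi w))) (K w)) /\
  (exists M : nat, exists c1 c2, 0 < c1 /\ 0 < c2 /\ forall x y,
       exists d, Zsup (DeltaSet pi phi K M x y) d /\
       c1 * zpow zeta d <= rho x y <= c2 * zpow zeta d) /\
  (exists L : nat, forall w, exists l : list T, (length l <= L)%nat /\
       forall v, edge pi phi K (lev pi phi w) w v -> In v l).

(* Main.v *)
Require Import Defs.
From Stdlib Require Import Reals ZArith List Lia Lra ClassicalEpsilon Classical.
Open Scope R_scope.

Fixpoint Desc {T : Type} (pi : T -> T) (phi : T) (j : nat) (w u : T) : Prop :=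
  match j with
  | O => w = u
  | S j' => exists v, Desc pi phi j' w v /\ child pi phi v u
  end.

Lemma Desc_lev {T} pi phi j (w u : T) :
  Desc pi phi j w u -> lev pi phi u = (lev pi phi w + Z.of_nat j)%Z.
Proof.
  revert u; induction j as [|j IH]; simpl; intros u H.
  - subst; lia.
  - destruct H as [v [H1 [_ H2]]]. apply IH in H1. lia.
Qed.

Lemma Desc_K {Y T} pi phi (K : T -> Y -> Prop)
  (HP5 : forall w x, K w x <-> exists v, child pi phi w v /\ K v x) j w u :
  Desc pi phi j w u -> forall x, K u x -> K w x.
Proof.
  revert u; induction j as [|j IH]; simpl; intros u H x Hx.
  - subst; auto.
  - destruct H as [v [H1 H2]]. apply (IH v H1). apply HP5. eauto.
Qed.

Lemma Desc_inj {T} pi phi j (b b' w : T) :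
  Desc pi phi j b w -> Desc pi phi j b' w -> b = b'.
Proof.
  revert w; induction j as [|j IH]; simpl; intros w H H'.
  - congruence.
  - destruct H as [v [H1 [H2 _]]]. destruct H' as [v' [H1' [H2' _]]].
    assert (v = v') by congruence. subst. eauto.
Qed.

Definition anchor {T} pi phi (k : nat) (b : T) : Prop :=
  exists q, lev pi phi b = (Z.of_nat k * q)%Z.

Lemma anchor_unique {T} pi phi k (b b' w : T) j j' :
  (0 < k)%nat -> anchor pi phi k b -> anchor pi phi k b' ->
  Desc pi phi j b w -> Desc pi phi j' b' w -> (j < k)%nat -> (j' < k)%nat -> b = b'.
Proof.
  intros Hk [q Hq] [q' Hq'] H H' Hj Hj'.
  pose proof (Desc_lev _ _ _ _ _ H). pose proof (Desc_lev _ _ _ _ _ H').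
  assert (j = j').
  { assert (q = q') by nia. subst. nia. }
  subst. eapply Desc_inj; eauto.
Qed.

Definition good {Y T} pi phi (K : T -> Y -> Prop) k (xc : T -> Y) (w u : T) : Prop :=
  child pi phi w u /\ forall b j, (j < k)%nat -> anchor pi phi k b ->
     Desc pi phi j b w -> K w (xc b) -> K u (xc b).

Lemma good_ex {Y T} pi phi (K : T -> Y -> Prop) k xc :
  (0 < k)%nat ->
  (forall w, exists x, K w x) ->
  (forall w x, K w x <-> exists v, child pi phi w v /\ K v x) ->
  forall w, exists u, good pi phi K k xc w u.
Proof.
  intros Hk HP2 HP5 w.
  destruct (classic (exists b j, (j < k)%nat /\ anchor pi phi k b /\
                     Desc pi phi j b w /\ K w (xc b))) as
     [[b0 [j0 [Hj0 [Ha0 [HD0 HK0]]]]] | Hn].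
  - apply HP5 in HK0. destruct HK0 as [u [Hc Hu]]. exists u; split; auto.
    intros b j Hj Ha HD _. assert (b = b0) by (eapply anchor_unique; eauto).
    subst; auto.
  - destruct (HP2 w) as [x Hx]. apply HP5 in Hx. destruct Hx as [u [Hc _]].
    exists u; split; auto. intros b j Hj Ha HD HK. exfalso; apply Hn; eauto 10.
Qed.

Definition sch {T} (d pi : T -> T) (w : T) (z : Z) : T :=
  if Z.leb 0 z then Nat.iter (Z.to_nat z) d w else Nat.iter (Z.to_nat (- z)) pi w.

Lemma sch_ok {T} (d pi : T -> T) (Hd : forall v, pi (d v) = v) w z :
  pi (sch d pi w (z + 1)) = sch d pi w z.
Proof.
  unfold sch. destruct (Z.leb_spec 0 (z+1)); destruct (Z.leb_spec 0 z).
  - replace (Z.to_nat (z+1)) with (S (Z.to_nat z)) by lia.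
    rewrite Nat.iter_succ. apply Hd.
  - assert (z = -1)%Z by lia. subst. simpl. reflexivity.
  - lia.
  - replace (Z.to_nat (- z)) with (S (Z.to_nat (- (z+1)))) by lia.
    rewrite Nat.iter_succ. reflexivity.
Qed.

Lemma sch_shift {T} (d pi : T -> T) (Hd : forall v, pi (d v) = v) w z :
  sch d pi (d w) z = sch d pi w (z + 1).
Proof.
  unfold sch. destruct (Z.leb_spec 0 (z+1)); destruct (Z.leb_spec 0 z).
  - replace (Z.to_nat (z+1)) with (S (Z.to_nat z)) by lia.
    rewrite Nat.iter_succ_r. reflexivity.
  - assert (z = -1)%Z by lia. subst. simpl. apply Hd.
  - lia.
  - replace (Z.to_nat (- z)) with (S (Z.to_nat (- (z+1)))) by lia.
    rewrite Nat.iter_succ_r, Hd. reflexivity.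
Qed.

Theorem mainTheorem14 (Y T : Type) (rho : Y -> Y -> R) (pi : T -> T) (phi : T)
    (K : T -> Y -> Prop) (zeta xi : R) :
  is_metric rho ->
  is_tree_ref T pi phi ->
  is_partition rho pi phi K ->
  basic_framework rho pi phi K zeta xi ->
  exists xi' : R, 0 < xi' /\
  exists y : T -> Y,
    (forall w, K w (y w) /\
       subset (ball rho (y w) (xi' * powerRZ zeta (lev pi phi w))) (K w)) /\
    (forall (n m : Z) (w : T), (n <= m)%Z -> lev pi phi w = n ->
       exists w', lev pi phi w' = m /\ y w' = y w).
Proof.
  intros Hm Htree Hpart Hbf.
  destruct Hpart as [HP1 [HP2 [HP3 [HP4 [HP5 HP6]]]]].
  destruct Hbf as [_ [_ [Hz [[c1 [c2 [Hc1 [Hc2 Hdiam]]]] [Ha [Hx _]]]]]].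
  destruct Hm as [Hm0 [Hm1 [Hm2 Hm3]]].
  destruct (HP2 phi) as [y0 _].
  pose (xc := fun w => epsilon (inhabits y0) (fun x => K w x /\
       subset (ball rho x (xi * powerRZ zeta (lev pi phi w))) (K w))).
  assert (Hxc : forall w, K w (xc w) /\
       subset (ball rho (xc w) (xi * powerRZ zeta (lev pi phi w))) (K w)).
  { intro w. unfold xc. apply epsilon_spec. apply Hx. }
  destruct (pow_lt_1_zero zeta ltac:(rewrite Rabs_pos_eq; lra) (xi / (2 * c2))
     ltac:(apply Rdiv_lt_0_compat; lra)) as [N HN].
  set (k := S N).
  assert (Hk : zeta ^ k < xi / (2 * c2)).
  { specialize (HN k ltac:(unfold k; lia)). rewrite Rabs_pos_eq in HN; auto.
    apply pow_le; lra. }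
  assert (Hk0 : (0 < k)%nat) by (unfold k; lia).
  pose (d := fun w => epsilon (inhabits w) (good pi phi K k xc w)).
  assert (Hd : forall w, good pi phi K k xc w (d w)).
  { intro w. unfold d. apply epsilon_spec. apply good_ex; auto. }
  idtac.
  assert (Hdpi : forall w, pi (d w) = w) by (intro w; apply (Hd w)).
  assert (HiterD : forall n w, Desc pi phi n w (Nat.iter n d w)).
  { induction n; intro w; simpl; auto. exists (Nat.iter n d w); split; auto.
    apply (Hd _). }
  pose (yv := fun w => epsilon (inhabits y0) (fun x => forall z, K (sch d pi w z) x)).
  assert (Hyv : forall w, (forall z, K (sch d pi w z) (yv w)) /\
                 forall y, (forall z, K (sch d pi w z) y) -> y = yv w).
  { intro w. destruct (HP6 (sch d pi w) (sch_ok d pi Hdpi w)) as [x [Hx1 Hx2]].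
    assert (H : forall z, K (sch d pi w z) (yv w)).
    { unfold yv. apply (epsilon_spec (inhabits y0) (fun x => forall z, K (sch d pi w z) x)).
      eauto. }
    split; auto. intros y Hy. rewrite (Hx2 y Hy). symmetry. apply Hx2; auto. }
  assert (Hshift : forall w, yv (d w) = yv w).
  { intro w. symmetry. apply (proj2 (Hyv (d w))). intro z.
    rewrite sch_shift by auto. apply (proj1 (Hyv w)). }
  assert (Hsch : forall w n, sch d pi w (Z.of_nat n) = Nat.iter n d w).
  { intros w n. unfold sch. destruct (Z.leb_spec 0 (Z.of_nat n)); [|lia].
    rewrite Nat2Z.id. reflexivity. }
  assert (Hz0 : zeta <> 0) by lra.
  exists (xi / 2 * zeta ^ k). split.
  { apply Rmult_lt_0_compat; [lra | apply pow_lt; lra]. }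
  exists yv. split.
  - intro w. split.
    { pose proof (proj1 (Hyv w) 0%Z). exact H. }
    intros z Hzz. unfold ball in Hzz.
    set (L := lev pi phi w) in *.
    set (i := Z.to_nat ((- L) mod Z.of_nat k)).
    assert (Hib : (0 <= (- L) mod Z.of_nat k < Z.of_nat k)%Z) by (apply Z.mod_pos_bound; lia).
    assert (Hik : (i < k)%nat) by (unfold i; lia).
    set (b := Nat.iter i d w).
    assert (HDb : Desc pi phi i w b) by apply HiterD.
    assert (Hlb : lev pi phi b = (L + Z.of_nat i)%Z) by (apply Desc_lev; auto).
    assert (Hanc : anchor pi phi k b).
    { exists (- ((- L) / Z.of_nat k))%Z. rewrite Hlb.
      pose proof (Z.div_mod (- L) (Z.of_nat k) ltac:(lia)).
      unfold i. rewrite Z2Nat.id by lia. nia. }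
    assert (Hpath : forall j, (j <= k)%nat ->
              Desc pi phi j b (Nat.iter j d b) /\ K (Nat.iter j d b) (xc b)).
    { induction j; intro Hj.
      - simpl. split; auto. apply (proj1 (Hxc b)).
      - destruct IHj as [IH1 IH2]; [lia|]. split.
        + apply HiterD.
        + simpl. apply (proj2 (Hd _) b j); auto; lia. }
    destruct (Hpath k (le_n _)) as [_ HKk].
    assert (HyK : K (Nat.iter k d b) (yv w)).
    { unfold b. rewrite <- Nat.iter_add. rewrite <- Hsch. apply Hyv. }
    destruct (Hdiam (Nat.iter k d b)) as [dd [[Hub _] [_ Hdd]]].
    assert (Hr1 : rho (xc b) (yv w) <= dd).
    { apply Hub. exists (xc b), (yv w). auto. }
    assert (Hlk : lev pi phi (Nat.iter k d b) = (lev pi phi b + Z.of_nat k)%Z)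
      by (apply Desc_lev; apply HiterD).
    rewrite Hlk, powerRZ_add, <- pow_powerRZ in Hdd by auto.
    assert (Hpb : 0 < powerRZ zeta (lev pi phi b)) by (apply powerRZ_lt; lra).
    assert (Hpw : 0 < powerRZ zeta L) by (apply powerRZ_lt; lra).
    assert (Hzk : 0 < zeta ^ k) by (apply pow_lt; lra).
    assert (Hki : zeta ^ k <= zeta ^ i).
    { replace k with (i + (k - i))%nat by lia. rewrite pow_add.
      assert (0 < zeta ^ i) by (apply pow_lt; lra).
      assert (zeta ^ (k - i) <= 1).
      { rewrite <- (pow1 (k - i)). apply pow_incr. lra. }
      nra. }
    assert (Hpbi : powerRZ zeta (lev pi phi b) = powerRZ zeta L * zeta ^ i).
    { rewrite Hlb, powerRZ_add, <- pow_powerRZ by auto. reflexivity. }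
    assert (Hc2k : c2 * zeta ^ k < xi / 2).
    { apply (Rmult_lt_compat_l c2) in Hk; auto.
      replace (c2 * (xi / (2 * c2))) with (xi / 2) in Hk by (field; lra). exact Hk. }
    assert (Hlt : rho (xc b) z < xi * powerRZ zeta (lev pi phi b)).
    { pose proof (Hm3 (xc b) (yv w) z).
      assert (rho (yv w) z <= xi / 2 * powerRZ zeta (lev pi phi b)).
      { rewrite Hpbi.
        assert (xi / 2 * zeta ^ k * powerRZ zeta L <= xi / 2 * (powerRZ zeta L * zeta ^ i)).
        { rewrite Rmult_assoc, (Rmult_comm (zeta ^ k)). apply Rmult_le_compat_l; [lra|].
          apply Rmult_le_compat_l; lra. }
        lra. }
      assert (dd < xi / 2 * powerRZ zeta (lev pi phi b)) by nra.
      lra. }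
    apply (Desc_K pi phi K HP5 i w b HDb).
    apply (proj2 (Hxc b)). exact Hlt.
  - intros n m w Hnm Hw. exists (Nat.iter (Z.to_nat (m - n)) d w). split.
    + rewrite (Desc_lev _ _ _ _ _ (HiterD _ w)). lia.
    + clear Hnm. induction (Z.to_nat (m - n)); simpl; auto. rewrite Hshift; auto.
Qed.
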